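(* Let $B\subseteq A$ be a unital inclusion of unital $C^*$-algebras and let $p\in B$ be a projection. If $B\subseteq A$ is $C^*$-irreducible, then so is $pBp\subseteq pAp$. Conversely, if $p$ is full in $B$ and $pBp\subseteq pAp$ is $C^*$-irreducible, then $B\subseteq A$ is $C^*$-irreducible; moreover, in this case the assignment $D\mapsto pDp$ is a bijection from the set of intermediate $C^*$-algebras $B\subseteq D\subseteq A$ onto the set of intermediate $C^*$-algebras $pBp\subseteq C\subseteq pAp$.
   Context: A unital inclusion $B\subseteq A$ of $C^*$-algebras is $C^*$-irreducible if every intermediate $C^*$-algebra $B\subseteq D\subseteq A$ is simple. A projection $p\in B$ is full in $B$ if it is not contained in any proper closed two-sided ideal of $B$. *)

(* Defs.v *)
From HB Require Import structures.
From mathcomp Require Import all_boot all_order all_algebra.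
From mathcomp Require Import all_classical all_reals all_analysis.
From mathcomp Require Import complex.
Set Implicit Arguments. Unset Strict Implicit. Unset Printing Implicit Defensive.
Import Order.TTheory GRing.Theory Num.Theory.
Import numFieldNormedType.Exports.
Local Open Scope classical_set_scope.
Local Open Scope ring_scope.

(** Unital C*-algebras: complete normed vector spaces over the complex
    numbers R[i] (R : realType, i.e. the real numbers) equipped with an
    associative bilinear multiplication [cmul] with unit [cone] (nonzero),
    an involution [star] that is conjugate linear and anti-multiplicative,
    a submultiplicative norm, and the C*-identity.
    (The multiplication is given explicitly rather than through
    GRing.Algebra because Hierarchy-Builder does not allow joining ring
    structures with Num.SemiNormedZmodule.) *)
HB.mixin Record isCstarAlgebra (R : realType) (A : Type)
  & CompleteNormedModule R[i] A := {
  cmul : A -> A -> A;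
  cone : A;
  cmulA : forall x y z : A, cmul x (cmul y z) = cmul (cmul x y) z;
  cmul1x : forall x : A, cmul cone x = x;
  cmulx1 : forall x : A, cmul x cone = x;
  cmulDl : forall x y z : A, cmul (x + y) z = cmul x z + cmul y z;
  cmulDr : forall x y z : A, cmul x (y + z) = cmul x y + cmul x z;
  cmulZl : forall (a : R[i]) (x y : A), cmul (a *: x) y = a *: cmul x y;
  cmulZr : forall (a : R[i]) (x y : A), cmul x (a *: y) = a *: cmul x y;
  cone_neq0 : cone <> 0;
  star : A -> A;
  starD : forall x y : A, star (x + y) = star x + star y;
  starZ : forall (a : R[i]) (x : A), star (a *: x) = Num.conj a *: star x;
  starM : forall x y : A, star (cmul x y) = cmul (star y) (star x);
  starK : forall x : A, star (star x) = x;
  normM_le : forall x y : A, `| cmul x y | <= `| x | * `| y |;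
  cstar_identity : forall x : A, `| cmul (star x) x | = `| x | ^+ 2
}.

#[short(type="cstarAlgType")]
HB.structure Definition CstarAlgebra (R : realType) :=
  {A of isCstarAlgebra R A & CompleteNormedModule R[i] A}.

Section Defs.
Context {R : realType} {A : cstarAlgType R}.

(** C*-subalgebra (not necessarily containing the unit of A):
    a norm-closed *-subalgebra. *)
Definition cstar_subalg (D : set A) : Prop :=
  [/\ D 0,
      (forall x y, D x -> D y -> D (x + y)),
      (forall (a : R[i]) x, D x -> D (a *: x)),
      (forall x y, D x -> D y -> D (cmul x y)) &
      (forall x, D x -> D (star x))] /\
  closed D.

Definition closed_ideal (D I : set A) : Prop :=
  I `<=` D /\
  [/\ I 0,
      (forall x y, I x -> I y -> I (x + y)),
      (forall (a : R[i]) x, I x -> I (a *: x)),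
      (forall d x, D d -> I x -> I (cmul d x) /\ I (cmul x d)) &
      closed I].

Definition simple_cstar (D : set A) : Prop :=
  D <> [set 0] /\
  forall I, closed_ideal D I -> I = [set 0] \/ I = D.

Definition intermediate (B E D : set A) : Prop :=
  [/\ cstar_subalg D, B `<=` D & D `<=` E].

Definition cstar_irreducible (B E : set A) : Prop :=
  forall D, intermediate B E D -> simple_cstar D.

Definition projection (p : A) : Prop := cmul p p = p /\ star p = p.

Definition full (B : set A) (p : A) : Prop :=
  forall I, closed_ideal B I -> I p -> I = B.

Definition corner (p : A) (D : set A) : set A := [set cmul (cmul p d) p | d in D].

End Defs.

(* Main.v *)
Require Import Defs.
From HB Require Import structures.
From mathcomp Require Import all_boot all_order all_algebra.
From mathcomp Require Import all_classical all_reals all_analysis.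
From mathcomp Require Import complex.
Import Order.TTheory GRing.Theory Num.Theory.
Local Open Scope classical_set_scope.
Local Open Scope ring_scope.

Set Implicit Arguments. Unset Strict Implicit. Unset Printing Implicit Defensive.

Section Basics.
Context {R : realType} {A : cstarAlgType R}.
Implicit Types x y a : A.
Local Notation "x ⋆ y" := (cmul x y) (at level 40, left associativity).

Lemma cmul0r x : 0 ⋆ x = 0.
Proof. by rewrite -(scale0r (0:A)) cmulZl !scale0r. Qed.
Lemma cmulr0 x : x ⋆ 0 = 0.
Proof. by rewrite -(scale0r (0:A)) cmulZr !scale0r. Qed.
Lemma cmulBr a x y : a ⋆ (x - y) = a ⋆ x - a ⋆ y.
Proof. by rewrite cmulDr -scaleN1r cmulZr scaleN1r. Qed.
Lemma cmulBl a x y : (x - y) ⋆ a = x ⋆ a - y ⋆ a.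
Proof. by rewrite cmulDl -scaleN1r cmulZl scaleN1r. Qed.
Lemma star0 : star (0 : A) = 0.
Proof.
have := starD (0:A) 0; rewrite addr0 => /(congr1 (fun z => z - star 0)).
by rewrite subrr addrK.
Qed.

Lemma lip_bound (c t e : R[i]) : 0 <= c -> 0 <= t -> 0 < e -> t < e / (c + 1) ->
  c * t < e.
Proof.
move=> c0 t0 e0 ht.
have c1 : 0 < c + 1 by rewrite ltr_wpDl.
apply: le_lt_trans (ler_wpM2l c0 (ltW ht)) _.
rewrite -[X in _ < X](divfK (lt0r_neq0 c1)) mulrC.
rewrite ltr_pM2l; last by rewrite divr_gt0.
by rewrite ltrDl.
Qed.

Lemma cmul_contr a : continuous (cmul a).
Proof.
move=> x; apply/cvgrPdist_lt => e e0.
have d0 : 0 < e / (`|a| + 1) by rewrite divr_gt0 // ltr_wpDl.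
near=> y.
rewrite -cmulBr; apply: le_lt_trans (normM_le _ _) _.
apply: lip_bound => //.
Unshelve. all: by end_near.
Qed.

Lemma cmul_contl a : continuous (fun x => x ⋆ a).
Proof.
move=> x; apply/cvgrPdist_lt => e e0.
have d0 : 0 < e / (`|a| + 1) by rewrite divr_gt0 // ltr_wpDl.
near=> y.
rewrite -cmulBl; apply: le_lt_trans (normM_le _ _) _.
rewrite mulrC; apply: lip_bound => //.
Unshelve. all: by end_near.
Qed.

Lemma cont_sandwich a b : continuous (fun x => a ⋆ x ⋆ b).
Proof.
move=> x; apply: (@continuous_comp _ _ _ (cmul a) (fun y => cmul y b)).
- exact: cmul_contr.
- exact: cmul_contl.
Qed.

Lemma closed_pre (f : A -> A) (S : set A) : continuous f -> closed S ->
  closed [set x | S (f x)].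
Proof. by move=> cf cS; apply: (preimage_closed (fun x _ => cf x)). Qed.

Lemma closed0A : closed [set (0 : A)].
Proof. apply: accessible_closed_set1; apply: hausdorff_accessible; exact: norm_hausdorff. Qed.

Lemma closed_eqf (f g : A -> A) : continuous f -> continuous g ->
  closed [set x | f x = g x].
Proof.
move=> cf cg.
have -> : [set x | f x = g x] = [set x | [set (0:A)] (f x - g x)].
  apply/seteqP; split => x /=; first by move=> ->; rewrite subrr.
  by move/eqP; rewrite subr_eq0 => /eqP.
apply: (@closed_pre (fun x => f x - g x)) closed0A => x.
apply: cvgB; [exact: cf | exact: cg].
Qed.

Lemma closed_all I (P : I -> set A) : (forall i, closed (P i)) ->
  closed [set x | forall i, P i x].
Proof.
move=> h.
have -> : [set x | forall i, P i x] = \bigcap_(i in setT) P i.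
  by apply/seteqP; split => x /= H i //; apply: H.
exact: closed_bigI.
Qed.

Lemma closed_imp (Q : Prop) (S : set A) : closed S -> closed [set x | Q -> S x].
Proof.
move=> cS; case: (pselect Q) => q.
  have -> : [set x | Q -> S x] = S by apply/seteqP; split => x /=; auto.
  exact: cS.
have -> : [set x | Q -> S x] = setT by apply/seteqP; split => x //=.
exact: closedT.
Qed.

End Basics.

Section Corner.
Context {R : realType} {A : cstarAlgType R}.
Implicit Types x y a : A.
Implicit Types D S : set A.
Local Notation "x ⋆ y" := (cmul x y) (at level 40, left associativity).

Lemma s0 D : cstar_subalg D -> D 0. Proof. by case=> -[]. Qed.
Lemma sD D x y : cstar_subalg D -> D x -> D y -> D (x + y). Proof. by case=> -[] _ h *; apply: h. Qed.
Lemma sZ D c x : cstar_subalg D -> D x -> D (c *: x). Proof. by case=> -[] _ _ h *; apply: h. Qed.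
Lemma sM D x y : cstar_subalg D -> D x -> D y -> D (x ⋆ y). Proof. by case=> -[] _ _ _ h *; apply: h. Qed.
Lemma sS D x : cstar_subalg D -> D x -> D (star x). Proof. by case=> -[] _ _ _ _ h *; apply: h. Qed.
Lemma sCl D : cstar_subalg D -> closed D. Proof. by case. Qed.

Lemma ppL p x : projection p -> x ⋆ p ⋆ p = x ⋆ p.
Proof. by case=> pp _; rewrite -cmulA pp. Qed.

Lemma corner_eq p S : projection p -> (forall x, S x -> S (p ⋆ x ⋆ p)) ->
  corner p S = [set y | S y /\ p ⋆ y ⋆ p = y].
Proof.
move=> [pp sp] hS; apply/seteqP; split => y /=.
  case=> d Sd <-; split; first exact: hS.
  by rewrite !cmulA pp -cmulA pp.
by case=> Sy e; exists y.
Qed.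

Lemma cornerT_fix p y : projection p -> corner p setT y ->
  [/\ p ⋆ y ⋆ p = y, p ⋆ y = y & y ⋆ p = y].
Proof.
move=> [pp sp] [d _ <-]; split.
- by rewrite !cmulA pp -cmulA pp.
- by rewrite !cmulA pp.
- by rewrite -cmulA pp.
Qed.

Lemma corner_subalg p D : projection p -> cstar_subalg D -> D p ->
  cstar_subalg (corner p D).
Proof.
move=> pr hD Dp; have [pp sp] := pr.
have hS : forall x, D x -> D (p ⋆ x ⋆ p) by move=> x Dx; do 2 apply: sM => //.
split; last first.
  rewrite corner_eq //; apply: closedI; first exact: sCl.
  apply: closed_eqf; [exact: cont_sandwich | move=> ?; exact: cvg_id].
split.
- by exists 0; [exact: s0 | rewrite cmulr0 cmul0r].
- move=> _ _ [x Dx <-] [y Dy <-]; exists (x + y); first exact: sD.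
  by rewrite cmulDr cmulDl.
- move=> c _ [x Dx <-]; exists (c *: x); first exact: sZ.
  by rewrite cmulZr cmulZl.
- move=> _ _ [x Dx <-] [y Dy <-]; exists (x ⋆ p ⋆ y); first by do 2 apply: sM => //.
  by rewrite !cmulA ppL.
- move=> _ [x Dx <-]; exists (star x); first exact: sS.
  by rewrite !starM sp cmulA.
Qed.

Lemma corner_sub p S1 S2 : S1 `<=` S2 -> corner p S1 `<=` corner p S2.
Proof. by move=> h _ [x Sx <-]; exists x => //; apply: h. Qed.

Lemma corner_inter p B D : projection p -> B p -> intermediate B setT D ->
  intermediate (corner p B) (corner p setT) (corner p D).
Proof.
move=> pr Bp [hD BD _]; split.
- by apply: corner_subalg => //; apply: BD.
- exact: corner_sub.
- exact: corner_sub.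
Qed.

End Corner.

Section MainLemmas.
Context {R : realType} {A : cstarAlgType R}.
Implicit Types x y a : A.
Implicit Types D S : set A.
Local Notation "x ⋆ y" := (cmul x y) (at level 40, left associativity).

Lemma exists_M (p : A) (B C : set A) : projection p -> cstar_subalg B -> B cone -> B p ->
  intermediate (corner p B) (corner p setT) C ->
  exists M, intermediate B setT M /\ corner p M = C.
Proof.
move=> pr hB B1 Bp [hC BC CT]; have [pp sp] := pr.
have ppL' x : x ⋆ p ⋆ p = x ⋆ p := ppL x pr.
have Cfix c : C c -> [/\ p ⋆ c ⋆ p = c, p ⋆ c = c & c ⋆ p = c].
  by move=> h; apply: cornerT_fix pr (CT _ h).
have CB b : B b -> C (p ⋆ b ⋆ p) by move=> h; apply: BC; exists b.
pose E := [set d | forall b1 b2, B b1 -> B b2 -> C (p ⋆ b1 ⋆ d ⋆ (b2 ⋆ p))].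
pose M := [set d | forall e, E e -> E (d ⋆ e) /\ E (e ⋆ d)].
have E1 : E cone.
  move=> b1 b2 h1 h2; have := CB _ (sM hB h1 h2).
  by rewrite ?cmulA ?cmulx1 ?cmul1x.
have E0 : E 0 by move=> *; rewrite cmulr0 cmul0r; exact: s0 hC.
have ED x y : E x -> E y -> E (x + y).
  move=> hx hy b1 b2 h1 h2; rewrite cmulDr cmulDl.
  by apply: (sD hC); [apply: hx | apply: hy].
have EZ c x : E x -> E (c *: x).
  by move=> hx b1 b2 h1 h2; rewrite cmulZr cmulZl; apply: (sZ _ hC); apply: hx.
have ES x : E x -> E (star x).
  move=> hx b1 b2 h1 h2.
  have := sS hC (hx (star b2) (star b1) (sS hB h2) (sS hB h1)).
  by rewrite !starM !starK sp ?cmulA.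
have Ecl : closed E.
  apply: closed_all => b1; apply: closed_all => b2.
  apply: closed_imp; apply: closed_imp.
  apply: closed_pre; [exact: cont_sandwich | exact: sCl].
have hM : cstar_subalg M.
  split; last first.
    apply: closed_all => e; apply: closed_imp; apply: closedI.
      by apply: closed_pre => //; exact: cmul_contl.
    by apply: closed_pre => //; exact: cmul_contr.
  split.
  - by move=> e he; rewrite cmul0r cmulr0.
  - move=> x y hx hy e he; rewrite cmulDl cmulDr.
    by case: (hx e he) => ? ?; case: (hy e he) => ? ?; split; apply: ED.
  - move=> c x hx e he; rewrite cmulZl cmulZr.
    by case: (hx e he) => ? ?; split; apply: EZ.
  - move=> x y hx hy e he; split.
      by rewrite -cmulA; apply: (hx _ (hy e he).1).1.
    by rewrite cmulA; apply: (hy _ (hx e he).2).2.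
  - move=> x hx e he; split.
      by have := ES _ (hx _ (ES _ he)).2; rewrite starM starK.
    by have := ES _ (hx _ (ES _ he)).1; rewrite starM starK.
have BM : B `<=` M.
  move=> b hb e he; split.
    move=> b1 b2 h1 h2; have := he (b1 ⋆ b) b2 (sM hB h1 hb) h2.
    by rewrite ?cmulA.
  move=> b1 b2 h1 h2; have := he b1 (b ⋆ b2) h1 (sM hB hb h2).
  by rewrite ?cmulA.
have CM : C `<=` M.
  move=> c hc e he; have [c1 c2 c3] := Cfix c hc; split.
    move=> b1 b2 h1 h2; have h := he cone b2 B1 h2.
    have := sM hC (sM hC (CB b1 h1) hc) h.
    rewrite -{2}c1; rewrite ?cmulA ?cmulx1 ?cmul1x.
    by rewrite ?cmulA ?cmulx1 ?cmul1x.
  move=> b1 b2 h1 h2; have h := he b1 cone h1 B1.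
  have := sM hC (sM hC h hc) (CB b2 h2).
  rewrite -{2}c1; rewrite ?cmulA ?cmulx1 ?cmul1x.
  by rewrite ?cmulA ?cmulx1 ?cmul1x.
have ME : M `<=` E by move=> d hd; have := (hd cone E1).1; rewrite cmulx1.
exists M; split; first by split.
apply/seteqP; split.
  move=> _ [d hd <-]; have := ME d hd cone cone B1 B1.
  by rewrite ?cmulA ?cmulx1 ?cmul1x.
move=> c hc; exists c; first exact: CM.
by case: (Cfix c hc).
Qed.

End MainLemmas.

Section Final.
Context {R : realType} {A : cstarAlgType R}.
Local Notation "x ⋆ y" := (cmul x y) (at level 40, left associativity).

Lemma inj_sub (p : A) (B D1 D2 : set A) : projection p -> cstar_subalg B ->
  B cone -> B p -> full B p -> intermediate B setT D1 ->
  intermediate B setT D2 -> corner p D1 = corner p D2 -> D1 `<=` D2.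
Proof.
move=> pr hB B1 Bp fullp [h1 BD1 _] [h2 BD2 _] e.
have [pp sp] := pr.
pose J1 := [set y | B y /\ forall d, D1 d -> D2 (p ⋆ d ⋆ y)].
have hJ1 : closed_ideal B J1.
  split; first by move=> y [].
  split.
  - split; [exact: s0 hB | by move=> d _; rewrite cmulr0; exact: s0 h2].
  - move=> x y [hx Hx] [hy Hy]; split; first exact: sD.
    by move=> d hd; rewrite cmulDr; apply: (sD h2); [apply: Hx | apply: Hy].
  - move=> c x [hx Hx]; split; first exact: sZ.
    by move=> d hd; rewrite cmulZr; apply: (sZ _ h2); apply: Hx.
  - move=> b y hb [hy Hy]; split; split.
    + exact: sM.
    + move=> d hd; have := Hy _ (sM h1 hd (BD1 _ hb)); by rewrite ?cmulA.
    + exact: sM.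
    + by move=> d hd; rewrite cmulA; apply: (sM h2); [exact: Hy | exact: BD2].
  - apply: closedI; first exact: sCl hB.
    apply: closed_all => d; apply: closed_imp.
    by apply: closed_pre; [exact: cmul_contr | exact: sCl h2].
have J1p : J1 p.
  split => // d hd.
  have : corner p D2 (p ⋆ d ⋆ p) by rewrite -e; exists d.
  case=> d2 hd2 <-; apply: (sM h2); last exact: BD2.
  by apply: (sM h2) => //; exact: BD2.
have J1B := fullp J1 hJ1 J1p.
have Dp d : D1 d -> D2 (p ⋆ d).
  move=> hd; have : J1 cone by rewrite J1B.
  by case=> _ /(_ d hd); rewrite cmulx1.
pose J2 := [set y | B y /\ forall d, D1 d -> D2 (y ⋆ d)].
have hJ2 : closed_ideal B J2.
  split; first by move=> y [].
  split.
  - split; [exact: s0 hB | by move=> d _; rewrite cmul0r; exact: s0 h2].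
  - move=> x y [hx Hx] [hy Hy]; split; first exact: sD.
    by move=> d hd; rewrite cmulDl; apply: (sD h2); [apply: Hx | apply: Hy].
  - move=> c x [hx Hx]; split; first exact: sZ.
    by move=> d hd; rewrite cmulZl; apply: (sZ _ h2); apply: Hx.
  - move=> b y hb [hy Hy]; split; split.
    + exact: sM.
    + by move=> d hd; rewrite -cmulA; apply: (sM h2); [exact: BD2 | exact: Hy].
    + exact: sM.
    + by move=> d hd; rewrite -cmulA; apply: Hy; exact: (sM h1 (BD1 _ hb) hd).
  - apply: closedI; first exact: sCl hB.
    apply: closed_all => d; apply: closed_imp.
    by apply: closed_pre; [exact: cmul_contl | exact: sCl h2].
have J2p : J2 p by split => // d hd; exact: Dp.
have J2B := fullp J2 hJ2 J2p.
move=> d hd; have : J2 cone by rewrite J2B.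
by case=> _ /(_ d hd); rewrite cmul1x.
Qed.

End Final.

Local Notation "x ⋆ y" := (cmul x y) (at level 40, left associativity).

Theorem lemma3p2 (R : realType) (A : cstarAlgType R) (B : set A) (p : A) :
  cstar_subalg B -> B cone -> B p -> projection p ->
  ((cstar_irreducible B setT -> p <> 0 ->
      cstar_irreducible (corner p B) (corner p setT)) /\
   (full B p -> cstar_irreducible (corner p B) (corner p setT) ->
      cstar_irreducible B setT /\
      set_bij [set D | intermediate B setT D]
              [set C | intermediate (corner p B) (corner p setT) C]
              (corner p))).
Proof.
move=> hB B1 Bp pr; have [pp sp] := pr.
have ppL' (x : A) : x ⋆ p ⋆ p = x ⋆ p := ppL x pr.
have Bne : forall D : set A, D cone -> D <> [set 0].
  by move=> D D1 h; apply: (@cone_neq0 R A); move: D1; rewrite h.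
split.
  move=> irr p0 C hCi.
  have [M [hMi MC]] := exists_M pr hB B1 Bp hCi.
  have [Mne Mid] := irr M hMi.
  have [hC BC CT] := hCi.
  have [hM BM _] := hMi.
  split.
    move=> C0; apply: p0.
    have : C p by apply: BC; exists p => //; rewrite pp pp.
    by rewrite C0.
  move=> J [JC [J0 JD JZ Jid Jcl]].
  pose I := [set x | M x /\ forall m1 m2, M m1 -> M m2 -> J (cmul p m1 ⋆ x ⋆ (m2 ⋆ p))].
  have CM : C `<=` M.
    move=> c; rewrite -MC => -[d hd <-]; apply: (sM hM); last exact: BM.
    by apply: (sM hM) => //; exact: BM.
  have MpC m : M m -> C (p ⋆ m ⋆ p) by move=> h; rewrite -MC; exists m.
  have hI : closed_ideal M I.
    split; first by move=> x [].
    split.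
    - split; [exact: s0 hM | by move=> *; rewrite cmulr0 cmul0r].
    - move=> x y [hx Hx] [hy Hy]; split; first exact: sD.
      by move=> m1 m2 h1 h2; rewrite cmulDr cmulDl; apply: JD; [apply: Hx | apply: Hy].
    - move=> c x [hx Hx]; split; first exact: sZ.
      by move=> m1 m2 h1 h2; rewrite cmulZr cmulZl; apply: JZ; apply: Hx.
    - move=> d x hd [hx Hx]; split; split.
      + exact: sM.
      + move=> m1 m2 h1 h2; have := Hx (m1 ⋆ d) m2 (sM hM h1 hd) h2.
        by rewrite ?cmulA.
      + exact: sM.
      + move=> m1 m2 h1 h2; have := Hx m1 (d ⋆ m2) h1 (sM hM hd h2).
        by rewrite ?cmulA.
    - apply: closedI; first exact: sCl hM.
      apply: closed_all => m1; apply: closed_all => m2.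
      apply: closed_imp; apply: closed_imp.
      by apply: closed_pre; [exact: cont_sandwich | exact: Jcl].
  have JI : J `<=` I.
    move=> j hj; have [j1 j2 j3] := cornerT_fix pr (CT _ (JC _ hj)).
    split; first exact: CM (JC _ hj).
    move=> m1 m2 h1 h2.
    have h3 := (Jid _ _ (MpC _ h1) hj).1.
    have := (Jid _ _ (MpC _ h2) h3).2.
    rewrite -{2}j1 ?cmulA ?ppL'.
    by rewrite ?cmulA ?ppL'.
  case: (Mid I hI) => hI0.
    left; apply/seteqP; split; first by move=> x /JI; rewrite hI0.
    by move=> x /= ->.
  right; apply/seteqP; split; first exact: JC.
  move=> c hc; have : I c by rewrite hI0; exact: CM.
  case=> _ /(_ cone cone (BM _ B1) (BM _ B1)).
  rewrite ?cmulA ?cmulx1 ?cmul1x.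
  by case: (cornerT_fix pr (CT _ hc)) => ->.
move=> fullp irrC.
have irrB : cstar_irreducible B setT.
  move=> D hDi; have [hD BD _] := hDi.
  have Dp : D p := BD _ Bp.
  have D1 : D cone := BD _ B1.
  split; first exact: Bne.
  move=> I [ID [I0 ID' IZ Iid Icl]].
  have hK := corner_inter pr Bp hDi.
  have [Kne Kid] := irrC _ hK.
  have IS x : I x -> I (p ⋆ x ⋆ p).
    by move=> hx; apply: (Iid _ _ Dp (Iid _ _ Dp hx).1).2.
  have hKI : closed_ideal (corner p D) (corner p I).
    split; first exact: corner_sub.
    split.
    - by exists 0 => //; rewrite cmulr0 cmul0r.
    - move=> _ _ [x hx <-] [y hy <-]; exists (x + y); first exact: ID'.
      by rewrite cmulDr cmulDl.
    - move=> c _ [x hx <-]; exists (c *: x); first exact: IZ.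
      by rewrite cmulZr cmulZl.
    - move=> _ _ [d hd <-] [x hx <-]; split.
        exists (d ⋆ p ⋆ x); first exact: (Iid _ _ (sM hD hd Dp) hx).1.
        by rewrite ?cmulA ?ppL'.
      exists (x ⋆ p ⋆ d); first exact: (Iid _ _ hd (Iid _ _ Dp hx).2).2.
      by rewrite ?cmulA ?ppL'.
    - rewrite corner_eq //; apply: closedI => //.
      apply: closed_eqf; [exact: cont_sandwich | move=> ?; exact: cvg_id].
  case: (Kid _ hKI) => hK0.
    left.
    have Ip0 x : I x -> x ⋆ p = 0.
      move=> hx.
      have hs : corner p I (star (x ⋆ p) ⋆ (x ⋆ p)).
        exists (star x ⋆ x); first exact: (Iid _ _ (sS hD (ID _ hx)) hx).1.
        by rewrite starM sp ?cmulA.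
      move: hs; rewrite hK0 /= => h0.
      have := cstar_identity (x ⋆ p); rewrite h0 normr0 => /esym /eqP.
      by rewrite expf_eq0 normr_eq0 => /andP[_ /eqP].
    pose J := [set z | B z /\ forall x, I x -> x ⋆ z = 0].
    have hJ : closed_ideal B J.
      split; first by move=> z [].
      split.
      - split; [exact: s0 hB | by move=> x _; rewrite cmulr0].
      - move=> y z [hy Hy] [hz Hz]; split; first exact: sD.
        by move=> x hx; rewrite cmulDr Hy // Hz // addr0.
      - move=> c z [hz Hz]; split; first exact: sZ.
        by move=> x hx; rewrite cmulZr Hz // scaler0.
      - move=> b z hb [hz Hz]; split; split.
        + exact: sM.
        + by move=> x hx; rewrite cmulA; apply: Hz; exact: (Iid _ _ (BD _ hb) hx).2.
        + exact: sM.
        + by move=> x hx; rewrite cmulA Hz // cmul0r.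
      - apply: closedI; first exact: sCl hB.
        apply: closed_all => x; apply: closed_imp.
        apply: (@closed_pre _ _ (cmul x) [set 0]) closed0A; exact: cmul_contr.
    have Jp : J p by split => // x hx; exact: Ip0.
    have JB := fullp J hJ Jp.
    have J1 : J cone by rewrite JB.
    apply/seteqP; split; last by move=> x /= ->.
    by move=> x hx; rewrite /= -(cmulx1 x); apply: J1.2.
  right.
  have Kp : corner p I p by rewrite hK0; exists p => //; rewrite pp pp.
  have Ip : I p by case: Kp => x hx <-; exact: IS.
  pose J := [set z | B z /\ I z].
  have hJ : closed_ideal B J.
    split; first by move=> z [].
    split.
    - split; [exact: s0 hB | exact: I0].
    - by move=> y z [? ?] [? ?]; split; [exact: sD | exact: ID'].
    - by move=> c z [? ?]; split; [exact: sZ | exact: IZ].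
    - move=> b z hb [hz Iz]; split; split.
      + exact: sM.
      + exact: (Iid _ _ (BD _ hb) Iz).1.
      + exact: sM.
      + exact: (Iid _ _ (BD _ hb) Iz).2.
    - by apply: closedI; [exact: sCl hB | exact: Icl].
  have JB := fullp J hJ (conj Bp Ip).
  have : J cone by rewrite JB.
  case=> _ I1.
  apply/seteqP; split; first exact: ID.
  by move=> d hd; rewrite -(cmul1x d); exact: (Iid _ _ hd I1).2.
split; first exact: irrB.
split.
- by move=> D hDi; exact: corner_inter pr Bp hDi.
- move=> D1 D2 /set_mem h1 /set_mem h2 e.
  apply/seteqP; split; first exact: (inj_sub pr hB B1 Bp fullp h1 h2 e).
  exact: (inj_sub pr hB B1 Bp fullp h2 h1 (esym e)).
- move=> C hC; have [M [hM MC]] := exists_M pr hB B1 Bp hC.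
  by exists M.
Qed.
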